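(* Let $\sigma$ be a $\Phi$-nondegenerate super filling of $\mathrm{dg}(\lambda)$ (order $<_2$) with distinguished cell $u$. Then $\Phi_u(\sigma)$ is again $\Phi$-nondegenerate with the same distinguished cell $u$ (so $\sigma\mapsto\Phi_u(\sigma)$ is an involution on $\Phi$-nondegenerate super fillings), and \[ q^{p(\Phi_u(\sigma))+\mathrm{maj}(\Phi_u(\sigma))}t^{\mathrm{quinv}(\Phi_u(\sigma))}=q^{p(\sigma)+\mathrm{maj}(\sigma)}t^{\mathrm{quinv}(\sigma)}. \]
   Context: Let $\lambda=(\lambda_1\ge\dots\ge\lambda_k>0)$ be a partition; $\mathrm{dg}(\lambda)=\{(r,i):1\le i\le k,1\le r\le\lambda_i\}$, $(r,i)$ being row $r$ from the bottom and column $i$ from the left (columns bottom-justified of heights $\lambda_i$); $\mathrm{leg}((r,i))=\lambda_i-r$. $\mathcal A=\{1,\bar1,2,\bar2,\dots\}$ consists of positive letters $i$ and negative letters $\bar i$, $|i|=|\bar i|=i$, totally ordered by $<_2$: $0<1<2<3<\cdots<\bar3<\bar2<\bar1$. $I(a,b)=1$ if $a>b$ or $a=b$ is negative, and $I(a,b)=0$ if $a<b$ or $a=b$ is positive. A super filling is $\sigma:\mathrm{dg}(\lambda)\to\mathcal A$; a cell $u=(r,i)$, $r>1$, is a descent if $I(\sigma(u),\sigma((r-1,i)))=1$, and $\mathrm{maj}(\sigma)=\sum_{\text{descents }u}(\mathrm{leg}(u)+1)$. A triple is either three cells $(r+1,i),(r,i),(r,j)$ with $i<j$, or (degenerate) two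 cells $(r,i),(r,j)$ with $i<j$ and $\lambda_i=r$; with $a=\sigma((r+1,i))$ ($a=0$ if degenerate), $b=\sigma((r,i))$, $c=\sigma((r,j))$, it is a quinv triple iff exactly one of $I(a,b)=1$, $I(c,b)=0$, $I(a,c)=0$ holds; $\mathrm{quinv}(\sigma)$ is their number. $p(\sigma)$ is the number of positive entries. The reading order goes through rows top to bottom, each row right to left. $\Phi_u(\sigma)$ changes the sign of the entry in cell $u$. The distinguished label of $\sigma$ is the smallest positive integer $a$ such that some cell $(r,j)$ has $|\sigma((r,j))|=a$ and $r>a$; the distinguished cell is the first cell in reading order whose entry has absolute value $a$; $\sigma$ is $\Phi$-nondegenerate if $a$ exists and the distinguished cell belongs to no degenerate triple. *)

(* Defs.v *)
From mathcomp Require Import all_boot all_order all_algebra.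
Set Implicit Arguments. Unset Strict Implicit. Unset Printing Implicit Defensive.
Import Order.TTheory GRing.Theory Num.Theory.

Definition is_partition (la : seq nat) : bool :=
  sorted geq la && all (fun x => 0 < x)%N la.

(* lambda_i, for 1 <= i <= k (1-indexed columns). *)
Definition lam (la : seq nat) (i : nat) : nat := nth 0%N la i.-1.

(* cells are pairs (r, i): row r from the bottom, column i from the left *)
Definition cell := (nat * nat)%type.

Definition in_dg (la : seq nat) (u : cell) : bool :=
  [&& 1 <= u.2, u.2 <= size la, 1 <= u.1 & u.1 <= lam la u.2]%N.

(* Letters: positive letter i is the integer i > 0, negative letter \bar i is
   the integer -i < 0; 0 is the auxiliary letter 0. *)
Definition letter := int.

(* The order <_2 : 0 < 1 < 2 < 3 < ... < \bar 3 < \bar 2 < \bar 1.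
   On integers: non-negatives first, in their natural order, then negatives in
   their natural order (-3 < -2 < -1). *)
Definition lt2 (a b : letter) : bool :=
  if (0 <= a)%R == (0 <= b)%R then (a < b)%R else (0 <= a)%R.

Definition Iab (a b : letter) : bool := lt2 b a || ((a == b) && (a < 0)%R).

(* super fillings: sigma r i is the entry of cell (r,i) *)
Definition filling := nat -> nat -> letter.

Definition is_super_filling (la : seq nat) (s : filling) : Prop :=
  forall u : cell, in_dg la u -> s u.1 u.2 != 0%R.

Definition leg (la : seq nat) (u : cell) : nat := (lam la u.2 - u.1)%N.

Definition maj (la : seq nat) (s : filling) : nat :=
  \sum_(1 <= i < (size la).+1) \sum_(2 <= r < (lam la i).+1)
     (if Iab (s r i) (s r.-1 i) then (leg la (r, i)).+1 else 0)%N.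

Definition quinv_cond (a b c : letter) : bool :=
  (Iab a b + ~~ Iab c b + ~~ Iab a c == 1)%N.

Definition quinv_nondeg (la : seq nat) (s : filling) : nat :=
  \sum_(1 <= i < (size la).+1) \sum_(i.+1 <= j < (size la).+1)
    \sum_(1 <= r < (lam la i)) 
      (if (r <= lam la j)%N && quinv_cond (s r.+1 i) (s r i) (s r j)
       then 1 else 0)%N.

Definition quinv_deg (la : seq nat) (s : filling) : nat :=
  \sum_(1 <= i < (size la).+1) \sum_(i.+1 <= j < (size la).+1)
      (let r := lam la i in
       if (1 <= r)%N && (r <= lam la j)%N && quinv_cond 0%R (s r i) (s r j)
       then 1 else 0)%N.

Definition quinv (la : seq nat) (s : filling) : nat :=
  (quinv_nondeg la s + quinv_deg la s)%N.

Definition pos_count (la : seq nat) (s : filling) : nat :=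
  \sum_(1 <= i < (size la).+1) \sum_(1 <= r < (lam la i).+1)
     (if (0 < s r i)%R then 1 else 0)%N.

Definition Phi (u : cell) (s : filling) : filling :=
  fun r i => if (r, i) == u then (- s r i)%R else s r i.

Definition read_before (u v : cell) : bool :=
  (v.1 < u.1)%N || ((u.1 == v.1) && (v.2 < u.2)%N).

Definition dist_label (la : seq nat) (s : filling) (a : nat) : Prop :=
  (0 < a)%N /\
  (exists u : cell, [/\ in_dg la u, `|s u.1 u.2|%N = a & (a < u.1)%N]) /\
  (forall b : nat, (0 < b)%N ->
     (exists u : cell, [/\ in_dg la u, `|s u.1 u.2|%N = b & (b < u.1)%N]) ->
     (a <= b)%N).

Definition dist_cell (la : seq nat) (s : filling) (u : cell) : Prop :=
  exists a : nat, [/\ dist_label la s a, in_dg la u, `|s u.1 u.2|%N = a &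
    forall v : cell, in_dg la v -> `|s v.1 v.2|%N = a -> v <> u -> read_before u v].

Definition in_deg_triple (la : seq nat) (u : cell) : Prop :=
  in_dg la u /\
  ((exists j, [/\ (u.2 < j)%N, (j <= size la)%N, lam la u.2 = u.1 & (u.1 <= lam la j)%N])
   \/ (exists i, [/\ (1 <= i)%N, (i < u.2)%N & lam la i = u.1])).

Definition Phi_nondeg_at (la : seq nat) (s : filling) (u : cell) : Prop :=
  dist_cell la s u /\ ~ in_deg_triple la u.

(* Main.v *)
Require Import Defs.
From mathcomp Require Import all_boot all_order all_algebra.
From mathcomp Require Import zify.
Import GRing.Theory Order.TTheory Num.Theory.

Lemma Iab_l (x y : int) : x != 0%R -> (absz x <= absz y)%N -> Iab x y = (x < 0)%R.
Proof.
rewrite /Iab /lt2.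
have [hx|hx] := leP 0%R x; have [hy|hy] := leP 0%R y; rewrite /=; lia.
Qed.
Lemma Iab_r (x y : int) : x != 0%R -> (absz x < absz y)%N -> Iab y x = (0 < x)%R.
Proof.
rewrite /Iab /lt2.
have [hx|hx] := leP 0%R x; have [hy|hy] := leP 0%R y; rewrite /=; lia.
Qed.

Lemma sum_split3 (F : nat -> nat) m r n : (m <= r < n)%N ->
  (\sum_(m <= i < n) F i = \sum_(m <= i < r) F i + F r + \sum_(r.+1 <= i < n) F i)%N.
Proof.
move=> /andP[h1 h2]; rewrite (big_cat_nat h1 (ltnW h2)) /= (big_ltn h2); lia.
Qed.

Arguments sum_split3 [F m r n].
Arguments Iab_l [x y].
Arguments Iab_r [x y].

Lemma absPhi u s r i : absz (Phi u s r i) = absz (s r i).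
Proof. by rewrite /Phi; case: ifP => _; rewrite ?abszN. Qed.

Lemma PhiE r j s p i : Phi (r, j) s p i = if (p == r) && (i == j) then (- s p i)%R else s p i.
Proof. by rewrite /Phi xpair_eqE. Qed.

Lemma dist_label_abs la s1 s2 a : (forall r i, absz (s1 r i) = absz (s2 r i)) ->
  dist_label la s1 a -> dist_label la s2 a.
Proof.
move=> habs [h0 [[v [h1 h2 h3]] hmin]]; split=> //; split.
  by exists v; rewrite -habs.
move=> b hb [w [w1 w2 w3]]; apply: hmin => //; exists w; by rewrite habs.
Qed.

Lemma qA (x d c : int) : x != 0%R -> (absz x <= absz d)%N -> (absz x <= absz c)%N ->
  quinv_cond (- x)%R d c = quinv_cond x d c.
Proof.
move=> h0 hd hc; have h0' : (- x != 0)%R by rewrite oppr_eq0.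
have hd' : (absz (- x)%R <= absz d)%N by rewrite abszN.
have hc' : (absz (- x)%R <= absz c)%N by rewrite abszN.
rewrite /quinv_cond (Iab_l h0 hd) (Iab_l h0 hc) (Iab_l h0' hd') (Iab_l h0' hc').
by case: (- x < 0)%R; case: (x < 0)%R; case: (Iab c d).
Qed.

Lemma qB (x e c : int) : x != 0%R -> (absz x < absz e)%N -> (absz x < absz c)%N ->
  quinv_cond e (- x)%R c = quinv_cond e x c.
Proof.
move=> h0 hd hc; have h0' : (- x != 0)%R by rewrite oppr_eq0.
have hd' : (absz (- x)%R < absz e)%N by rewrite abszN.
have hc' : (absz (- x)%R < absz c)%N by rewrite abszN.
rewrite /quinv_cond (Iab_r h0 hd) (Iab_r h0 hc) (Iab_r h0' hd') (Iab_r h0' hc').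
by case: (0 < - x)%R; case: (0 < x)%R; case: (Iab e c).
Qed.

Lemma qC (x a b : int) : x != 0%R -> (absz x < absz a)%N -> (absz x <= absz b)%N ->
  quinv_cond a b (- x)%R = quinv_cond a b x.
Proof.
move=> h0 hd hc; have h0' : (- x != 0)%R by rewrite oppr_eq0.
have hd' : (absz (- x)%R < absz a)%N by rewrite abszN.
have hc' : (absz (- x)%R <= absz b)%N by rewrite abszN.
rewrite /quinv_cond (Iab_r h0 hd) (Iab_l h0 hc) (Iab_r h0' hd') (Iab_l h0' hc').
have : (0 < x)%R = ~~ (x < 0)%R by lia.
have : (0 < - x)%R = ~~ (- x < 0)%R by lia.
move=> -> ->.
by case: (- x < 0)%R; case: (x < 0)%R; case: (Iab a b).
Qed.

Theorem mainTheorem11 (la : seq nat) (s : filling) (u : cell) :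
  is_partition la -> is_super_filling la s ->
  Phi_nondeg_at la s u ->
  Phi_nondeg_at la (Phi u s) u /\
  (forall (R : comNzRingType) (q t : R),
     (q ^+ (pos_count la (Phi u s) + maj la (Phi u s)) * t ^+ quinv la (Phi u s)
      = q ^+ (pos_count la s + maj la s) * t ^+ quinv la s)%R).
Proof.
move=> _ hsf [[a [hdl hu hxa hfirst]] hnd].
have hdl' := hdl; move: hdl' => [ha0 [[w [hw1 hw2 hw3]] hmin]].
case: u hu hxa hfirst hnd => r j hu hxa hfirst hnd /=.
move: (hu); rewrite /in_dg /= => /and4P[hj1 hj2 hr1 hrL].
simpl in hxa.
have hra : (a < r)%N.
  case: (eqVneq w (r, j)) => [ew|nw]; first by subst w.
  have := hfirst w hw1 hw2 (elimN eqP nw); rewrite /read_before /=; lia.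
have hx0 : s r j != 0%R by apply/eqP => e; rewrite e in hxa; lia.
have H1 : forall v : cell, in_dg la v -> (a <= v.1)%N -> (a <= absz (s v.1 v.2))%N.
  move=> v hv hav; rewrite leqNgt; apply/negP => hlt.
  have hb0 : (0 < absz (s v.1 v.2))%N.
    by rewrite absz_gt0; apply: hsf.
  have := hmin _ hb0 (ex_intro _ v (And3 hv erefl (leq_trans hlt hav))); lia.
have H2 : forall v : cell, in_dg la v -> read_before v (r, j) -> absz (s v.1 v.2) != a.
  move=> v hv hrb; apply/eqP => e.
  case: (eqVneq v (r, j)) => [ev|nv]; first by subst v; move: hrb; rewrite /read_before /=; lia.
  have := hfirst v hv e (elimN eqP nv); move: hrb; rewrite /read_before /=; lia.
split.
  split=> //; exists a; split=> //.
  - by apply: (@dist_label_abs la s _ a _ hdl) => ??; rewrite absPhi.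
  - by rewrite absPhi.
  - by move=> v hv; rewrite absPhi; apply: hfirst.
have Epm : (pos_count la (Phi (r, j) s) + maj la (Phi (r, j) s) = pos_count la s + maj la s)%N.
  rewrite /pos_count /maj -!big_split /=; apply: eq_big_nat => i /andP[hi1 hi2].
  case: (eqVneq i j) => [->{i hi1 hi2}|nij]; last first.
    have ne : forall p, ((p == r) && (i == j)) = false by move=> p; rewrite (negbTE nij) andbF.
    by congr (_ + _); apply: eq_big_nat => p _; rewrite !PhiE !ne.
  have hr2 : (2 <= r)%N by lia.
  have s1 : (1 <= r < (lam la j).+1)%N by lia.
  have s2 : (2 <= r < (lam la j).+1)%N by lia.
  rewrite (sum_split3 s1) (sum_split3 s2) (sum_split3 s1) (sum_split3 s2).
  have E1 : (\sum_(1 <= i < r) (if (0 < Phi (r, j) s i j)%R then 1 else 0) =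
             \sum_(1 <= i < r) (if (0 < s i j)%R then 1 else 0))%N.
    apply: eq_big_nat => p hp; rewrite PhiE.
    by have -> : (p == r) = false by lia.
  have E2 : (\sum_(r.+1 <= i < (lam la j).+1) (if (0 < Phi (r, j) s i j)%R then 1 else 0) =
             \sum_(r.+1 <= i < (lam la j).+1) (if (0 < s i j)%R then 1 else 0))%N.
    apply: eq_big_nat => p hp; rewrite PhiE.
    by have -> : (p == r) = false by lia.
  have E3 : (\sum_(2 <= i < r) (if Iab (Phi (r, j) s i j) (Phi (r, j) s i.-1 j) then (leg la (i, j)).+1 else 0) =
             \sum_(2 <= i < r) (if Iab (s i j) (s i.-1 j) then (leg la (i, j)).+1 else 0))%N.
    apply: eq_big_nat => p hp; rewrite !PhiE.
    have -> : (p == r) = false by lia.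
    by have -> : (p.-1 == r) = false by lia.
  rewrite E1 E2 E3 !PhiE !eqxx /=.
  have -> : (r.-1 == r) = false by lia.
  have hd : (absz (s r j) <= absz (s r.-1 j))%N.
    rewrite hxa; apply: (H1 (r.-1, j)); rewrite /in_dg /=; lia.
  rewrite (Iab_l hx0 hd) Iab_l ?oppr_eq0 ?abszN //= oppr_lt0 oppr_gt0.
  case: (ltnP r (lam la j)) => hrl; last first.
    have -> : lam la j = r by lia.
    rewrite !(big_geq (leqnn r.+1)).
    have [hp|hn] : (0 < s r j)%R \/ (s r j < 0)%R by lia.
      have -> : (s r j < 0)%R = false by lia.
      by rewrite hp /leg /=; lia.
    have -> : (0 < s r j)%R = false by lia.
    by rewrite hn /leg /=; lia.
  have s3 : (r.+1 <= r.+1 < (lam la j).+1)%N by lia.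
  rewrite !(sum_split3 s3).
  rewrite !(big_geq (leqnn r.+1)).
  have E4 : (\sum_(r.+2 <= i < (lam la j).+1) (if Iab (Phi (r, j) s i j) (Phi (r, j) s i.-1 j) then (leg la (i, j)).+1 else 0) =
             \sum_(r.+2 <= i < (lam la j).+1) (if Iab (s i j) (s i.-1 j) then (leg la (i, j)).+1 else 0))%N.
    apply: eq_big_nat => p hp; rewrite !PhiE.
    have -> : (p == r) = false by lia.
    by have -> : (p.-1 == r) = false by lia.
  rewrite E4 !PhiE !eqxx /=.
  have -> : (r.+1 == r) = false by lia.
  rewrite /=.
  have he : (absz (s r j) < absz (s r.+1 j))%N.
    have h1 := H1 (r.+1, j); have h2 := H2 (r.+1, j).
    rewrite /in_dg /read_before /= in h1 h2.
    rewrite hxa; have := h1 ltac:(lia) ltac:(lia); have := h2 ltac:(lia) ltac:(lia); lia.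
  rewrite (Iab_r hx0 he) Iab_r ?oppr_eq0 ?abszN //= oppr_gt0.
  have [hp|hn] : (0 < s r j)%R \/ (s r j < 0)%R by lia.
    have -> : (s r j < 0)%R = false by lia.
    by rewrite hp /leg /=; lia.
  have -> : (0 < s r j)%R = false by lia.
  by rewrite hn /leg /=; lia.
have Eq : quinv la (Phi (r, j) s) = quinv la s.
  rewrite /quinv; congr (_ + _).
    rewrite /quinv_nondeg; apply: eq_big_nat => i /andP[hi1 hi2].
    apply: eq_big_nat => k /andP[hk1 hk2]; apply: eq_big_nat => p /andP[hp1 hp2].
    case hpk : (p <= lam la k)%N => //=.
    rewrite !PhiE.
    case E1 : ((p.+1 == r) && (i == j)); case E2 : ((p == r) && (i == j));
      case E3 : ((p == r) && (k == j)); try (exfalso; lia); rewrite /=.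
    - move: E1 => /andP[/eqP ep /eqP ei]; subst i r.
      have hd : (absz (s p.+1 j) <= absz (s p j))%N.
        by rewrite hxa; apply: (H1 (p, j)) => /=; [rewrite /in_dg /=|]; lia.
      have hc : (absz (s p.+1 j) <= absz (s p k))%N.
        by rewrite hxa; apply: (H1 (p, k)) => /=; [rewrite /in_dg /=|]; lia.
      by rewrite qA.
    - move: E2 => /andP[/eqP ep /eqP ei]; subst i p.
      have hd : (absz (s r j) < absz (s r.+1 j))%N.
        have h1 := H1 (r.+1, j); have h2 := H2 (r.+1, j).
        rewrite /in_dg /read_before /= in h1 h2.
        rewrite hxa; have := h1 ltac:(lia) ltac:(lia); have := h2 ltac:(lia) ltac:(lia); lia.
      have hc : (absz (s r j) < absz (s r k))%N.
        have h1 := H1 (r, k); have h2 := H2 (r, k).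
        rewrite /in_dg /read_before /= in h1 h2.
        rewrite hxa; have := h1 ltac:(lia) ltac:(lia); have := h2 ltac:(lia) ltac:(lia); lia.
      by rewrite qB.
    - move: E3 => /andP[/eqP ep /eqP ek]; subst k p.
      have hd : (absz (s r j) < absz (s r.+1 i))%N.
        have h1 := H1 (r.+1, i); have h2 := H2 (r.+1, i).
        rewrite /in_dg /read_before /= in h1 h2.
        rewrite hxa; have := h1 ltac:(lia) ltac:(lia); have := h2 ltac:(lia) ltac:(lia); lia.
      have hc : (absz (s r j) <= absz (s r i))%N.
        by rewrite hxa; apply: (H1 (r, i)) => /=; [rewrite /in_dg /=|]; lia.
      by rewrite qC.
    - by [].
  rewrite /quinv_deg; apply: eq_big_nat => i /andP[hi1 hi2].
  apply: eq_big_nat => k /andP[hk1 hk2] /=.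
  case hc : ((1 <= lam la i) && (lam la i <= lam la k))%N => //=.
  rewrite !PhiE.
  have -> : ((lam la i == r) && (i == j)) = false.
    apply/negP => /andP[/eqP e1 /eqP e2]; subst i; apply: hnd; split=> //.
    by left; exists k; split=> //=; lia.
  have -> : ((lam la i == r) && (k == j)) = false.
    apply/negP => /andP[/eqP e1 /eqP e2]; subst k; apply: hnd; split=> //.
    by right; exists i; split=> //=; lia.
  by [].
by move=> R q t; rewrite Epm Eq.
Qed.
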